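(* Let $s \ge 1$ and suppose $D$ is a $T_s$-free digraph on $n$ vertices. Then for every $k \ge 1$ there exists a $K_s$-free graph $G$ on $n$ vertices such that \[ i_k(G) \le \left(\frac{e}{k}\right)^k \cdot \mathrm{fwi}_k(D). \]
   Context: $T_s$ denotes the transitive tournament on $s$ vertices; a digraph is $T_s$-free if it contains no copy of $T_s$. For a digraph $D$, a $k$-tuple $(v_1,\dots,v_k) \in V(D)^k$ is forward independent if there are no $i<j$ in $[k]$ with $(v_i,v_j)$ an arc of $D$; $\mathrm{fwi}_k(D)$ denotes the number of forward independent $k$-tuples in $D$. For a graph $G$, $i_k(G)$ denotes the number of independent sets of size $k$ in $G$. *)

(* Defs.v *)
From mathcomp Require Import all_boot.
From Stdlib Require Import Reals.
Set Implicit Arguments. Unset Strict Implicit. Unset Printing Implicit Defensive.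

(* A digraph on the finite vertex type V is an arc relation a : rel V
   ((u,v) is an arc iff a u v).  A graph is a symmetric irreflexive rel V. *)

Definition contains_Ts (V : finType) (a : rel V) (s : nat) : Prop :=
  exists f : 'I_s -> V, injective f /\ forall i j : 'I_s, i < j -> a (f i) (f j).

Definition Ts_free (V : finType) (a : rel V) (s : nat) : Prop :=
  ~ contains_Ts a s.

Definition Ks_free (V : finType) (g : rel V) (s : nat) : Prop :=
  ~ exists f : 'I_s -> V, injective f /\ forall i j : 'I_s, i != j -> g (f i) (f j).

Definition fwi (V : finType) (a : rel V) (k : nat) : nat :=
  #|[set t : {ffun 'I_k -> V} |
     [forall i : 'I_k, forall j : 'I_k, (i < j) ==> ~~ a (t i) (t j)]]|.

Definition indep_count (V : finType) (g : rel V) (k : nat) : nat :=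
  #|[set S : {set V} | (#|S| == k) && [forall x in S, forall y in S, ~~ g x y]]|.

(* Main.v *)
Require Import Defs.
From mathcomp Require Import all_boot.
From Stdlib Require Import Reals Lra Psatz.
From mathcomp Require Import fingroup perm.
Set Implicit Arguments. Unset Strict Implicit.

Lemma sorted_enum (V : finType) (r : V -> nat) (rinj : injective r)
  (S : {set V}) k : #|S| = k ->
  exists t : 'I_k -> V, (forall i, t i \in S) /\
    (forall i j : 'I_k, i < j -> r (t i) < r (t j)).
Proof.
case: k => [|k] cS.
  by exists (fun i : 'I_0 => False_rect V (ltac:(by have := ltn_ord i))); split => -[].
have : 0 < #|S| by rewrite cS.
case/card_gt0P => x0 _.
pose leT := fun x y => r x <= r y.
pose s := sort leT (enum S).
have ss : size s = k.+1 by rewrite size_sort -cardE cS.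
have tr : transitive leT by move=> x y z; apply: leq_trans.
have so : sorted leT s by apply: sort_sorted => x y; apply: leq_total.
have us : uniq s by rewrite sort_uniq enum_uniq.
exists (fun i => nth x0 s i); split.
  by move=> i; rewrite -mem_enum -(mem_sort leT) mem_nth // ss.
move=> i j hij.
have hi : (i : nat) \in [pred n | n < size s] by rewrite inE ss.
have hj : (j : nat) \in [pred n | n < size s] by rewrite inE ss.
have := sorted_ltn_nth tr x0 so (i:nat) (j:nat) hi hj hij.
rewrite /leT leq_eqVlt => /orP [/eqP/rinj|//].
move/eqP; rewrite nth_uniq ?ss // => /eqP eij.
by rewrite eij ltnn in hij.
Qed.

Lemma ge_id k (g : 'I_k -> 'I_k) :
  (forall i j : 'I_k, i < j -> g i < g j) -> forall i : 'I_k, i <= g i.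
Proof.
move=> H [n Hn]; elim: n Hn => [//|n IH] Hn.
have Hn' : n < k by apply: ltnW.
have := H (Ordinal Hn') (Ordinal Hn) (ltnSn n).
by apply: leq_ltn_trans; apply: IH.
Qed.

Lemma incr_perm_id k (g : {perm 'I_k}) :
  (forall i j : 'I_k, i < j -> g i < g j) -> g = 1%g.
Proof.
move=> H; have Hi : forall i j : 'I_k, i < j -> (g^-1)%g i < (g^-1)%g j.
  move=> i j hij; case: (ltngtP ((g^-1)%g i) ((g^-1)%g j)) => // h.
    have := H _ _ h; rewrite !permKV => h'.
    by have := ltn_trans hij h'; rewrite ltnn.
  have /val_inj/perm_inj eij := h.
  by rewrite eij ltnn in hij.
apply/permP => i; rewrite perm1; apply/val_inj/eqP.
rewrite eqn_leq (ge_id H i) andbT.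
by have := ge_id Hi (g i); rewrite permK.
Qed.

Section Main.
Variables (V : finType) (a : rel V) (k : nat).

Definition rk (sg : {perm V}) (x : V) : nat := enum_rank (sg x).

Lemma rk_inj sg : injective (rk sg).
Proof. by move=> x y /val_inj/enum_rank_inj/perm_inj. Qed.

Definition Gs (sg : {perm V}) : rel V := fun u v =>
  (a u v && (rk sg u < rk sg v)) || (a v u && (rk sg v < rk sg u)).

Definition incr (sg : {perm V}) (t : 'I_k -> V) : bool :=
  [forall i : 'I_k, forall j : 'I_k, (i < j) ==> (rk sg (t i) < rk sg (t j))].

Lemma incrP sg t : reflect (forall i j : 'I_k, i < j -> rk sg (t i) < rk sg (t j))
  (incr sg t).
Proof.
apply: (iffP forallP) => H.
  by move=> i j hij; have /forallP/(_ j)/implyP := H i; apply.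
by move=> i; apply/forallP => j; apply/implyP; apply: H.
Qed.

Lemma incr_inj sg t : incr sg t -> injective t.
Proof.
move/incrP=> H i j e; apply/val_inj.
case: (ltngtP i j) => // h; have := H _ _ h; by rewrite e ltnn.
Qed.

Definition Fset := [set t : {ffun 'I_k -> V} |
     [forall i : 'I_k, forall j : 'I_k, (i < j) ==> ~~ a (t i) (t j)]].

Definition Pset sg := [set t : {ffun 'I_k -> V} | (t \in Fset) && incr sg t].

Lemma stepA sg : indep_count (Gs sg) k <= #|Pset sg|.
Proof.
rewrite /indep_count.
set I := [set S : {set V} | _].
have sub : I \subset (fun t : {ffun 'I_k -> V} => t @: setT) @: Pset sg.
  apply/subsetP => S; rewrite inE => /andP [/eqP cS /forallP ind].
  have [t [tS tinc]] := sorted_enum (rk_inj (sg:=sg)) cS.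
  have inc : incr sg [ffun i => t i] by apply/incrP => i j h; rewrite !ffunE; apply: tinc.
  apply/imsetP; exists [ffun i => t i].
    rewrite inE inc andbT inE; apply/forallP => i; apply/forallP => j; apply/implyP => h.
    rewrite !ffunE.
    have /forallP/(_ (t j)) := implyP (ind (t i)) (tS i).
    move/implyP/(_ (tS j)); rewrite /Gs (tinc _ _ h) andbT.
    by case: (a (t i) (t j)).
  apply/eqP; rewrite eq_sym eqEcard; apply/andP; split.
    apply/subsetP => x; case/imsetP => i _ ->; by rewrite ffunE.
  by rewrite card_imset ?cardsT ?card_ord ?cS //; apply: incr_inj inc.
by apply: leq_trans (subset_leq_card sub) (leq_imset_card _ _).
Qed.

Lemma card_sum (T : finType) (P : pred T) : #|[set x | P x]| = \sum_x (P x : nat).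
Proof.
rewrite -sum1_card big_mkcond /=; apply: eq_bigr => x _; rewrite inE.
by case: (P x).
Qed.

Lemma stepB1 (t : 'I_k -> V) (pi : {perm 'I_k}) : injective t ->
  #|[set sg | incr sg t]| <= #|[set sg | incr sg (t \o pi)]|.
Proof.
move=> tinj.
pose f x := if [pick j | t j == x] is Some j then t ((pi^-1)%g j) else x.
have ft : forall i, f (t (pi i)) = t i.
  move=> i; rewrite /f; case: pickP => [j /eqP /tinj ->|/(_ (pi i))].
    by rewrite permK.
  by rewrite eqxx.
have finj : injective f.
  move=> x y; rewrite /f.
  case: pickP => [j /eqP <-|nx]; case: pickP => [j' /eqP <-|ny] //.
  - by move/tinj/perm_inj ->.
  - by move=> e; have := ny ((pi^-1)%g j); rewrite e eqxx.
  - by move=> e; have := nx ((pi^-1)%g j'); rewrite e eqxx.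
pose tau := perm finj.
have sub : (fun sg => (tau * sg)%g) @: [set sg | incr sg t] \subset
    [set sg | incr sg (t \o pi)].
  apply/subsetP => s' /imsetP [sg]; rewrite !inE => /incrP H ->.
  apply/incrP => i j h; rewrite /rk /= !permM !permE !ft.
  exact: H.
by apply: leq_trans (subset_leq_card sub); rewrite card_imset //; apply: mulgI.
Qed.

Lemma stepB2 (t : 'I_k -> V) :
  \sum_(pi : {perm 'I_k}) #|[set sg | incr sg (t \o pi)]| <= #|{perm V}|.
Proof.
under eq_bigr => pi _ do rewrite card_sum.
rewrite exchange_big /= -sum1_card.
apply: leq_sum => sg _.
rewrite -card_sum.
apply/card_le1P => pi; rewrite inE => /incrP H1 pi'; rewrite inE.
apply/idP/idP => [/incrP H2|/eqP ->]; last by apply/incrP.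
apply/eqP.
pose g := (pi' * pi^-1)%g.
have gH : forall i j : 'I_k, i < j -> g i < g j.
  move=> i j hij; case: (ltngtP (g i) (g j)) => // h.
    have := H1 _ _ h; rewrite /g /= !permM /= !permKV => h'.
    by have := ltn_trans (H2 _ _ hij) h'; rewrite ltnn.
  have /val_inj/perm_inj eij := h.
  by rewrite eij ltnn in hij.
have e := incr_perm_id gH; rewrite /g in e.
by rewrite -[pi']mulg1 -(mulVg pi) mulgA e mul1g.
Qed.

Lemma stepB (t : 'I_k -> V) : k`! * #|[set sg | incr sg t]| <= #|{perm V}|.
Proof.
case: (boolP [exists sg, incr sg t]) => [/existsP [sg /incr_inj tinj]|ne].
  rewrite -card_Sn -sum_nat_const.
  apply: leq_trans (stepB2 t); apply: leq_sum => pi _; exact: stepB1.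
suff -> : #|[set sg | incr sg t]| = 0 by rewrite muln0.
apply/eqP; rewrite cards_eq0; apply/eqP/setP => sg; rewrite !inE.
by apply/negP => h; move/existsP: ne; apply; exists sg.
Qed.

Lemma main_nat : exists sg, k`! * indep_count (Gs sg) k <= fwi a k.
Proof.
have H : k`! * \sum_sg indep_count (Gs sg) k <= fwi a k * #|{perm V}|.
  apply: leq_trans (_ : k`! * \sum_sg #|Pset sg| <= _).
    by rewrite leq_mul2l; apply/orP; right; apply: leq_sum => sg _; apply: stepA.
  have -> : \sum_sg #|Pset sg| = \sum_(t : {ffun 'I_k -> V}) (t \in Fset) * #|[set sg | incr sg t]|.
    under eq_bigr => sg _ do rewrite /Pset card_sum.
    rewrite exchange_big /=; apply: eq_bigr => t _.
    rewrite card_sum big_distrr /=; apply: eq_bigr => sg _.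
    by case: (t \in Fset); case: (incr sg t).
  rewrite big_distrr /=.
  apply: leq_trans (_ : \sum_(t : {ffun 'I_k -> V}) (t \in Fset) * #|{perm V}| <= _).
    apply: leq_sum => t _; rewrite mulnCA leq_mul2l; apply/orP; right; exact: stepB.
  rewrite -big_distrl /= leq_mul2r; apply/orP; right.
  by rewrite /fwi card_sum; apply: leq_sum => t _; rewrite /Fset inE.
case: (boolP [exists sg, k`! * indep_count (Gs sg) k <= fwi a k]) => [/existsP//|ne].
exfalso.
have N0 : 0 < #|{perm V}| by apply/card_gt0P; exists 1%g.
have : \sum_(sg : {perm V}) (fwi a k).+1 <= k`! * \sum_sg indep_count (Gs sg) k.
  rewrite big_distrr /=; apply: leq_sum => sg _.
  rewrite ltnNge; apply/negP => h; move/existsP: ne; apply; by exists sg.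
rewrite sum_nat_const => H2.
have := leq_trans H2 H; move: N0; clear; set N := #|_|; set F := fwi a k; move=> N0 h.
have : N * F.+1 <= N * F by rewrite [N * F]mulnC.
by rewrite leq_mul2l ltnn orbF => /eqP N00; rewrite N00 in N0.
Qed.

End Main.

Lemma onepx_pow (x : R) (n : nat) : (0 <= x)%R -> ((1 + x) ^ n <= exp (INR n * x))%R.
Proof.
move=> hx; elim: n => [|n IH].
  rewrite Rmult_0_l exp_0; apply: Rle_refl.
rewrite S_INR Rmult_plus_distr_r Rmult_1_l (Rplus_comm (INR n * x)) exp_plus.
apply: Rmult_le_compat => //.
- lra.
- apply: pow_le; lra.
- apply: exp_ineq1_le.
Qed.

Lemma fact_bound (k : nat) : (INR k ^ k <= exp 1 ^ k * INR (k`!))%R.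
Proof.
elim: k => [|k IH]; first by rewrite /= Rmult_1_l; apply: Rle_refl.
rewrite factS -multE mult_INR.
have e0 : (0 < exp 1)%R by apply: exp_pos.
case: k IH => [|k] IH.
  rewrite /= !Rmult_1_r; have := exp_ineq1_le 1; lra.
have k0 : (0 < INR k.+1)%R by apply: lt_0_INR; apply/ltP.
have H : (INR k.+2 ^ k.+1 <= exp 1 * INR k.+1 ^ k.+1)%R.
  have -> : INR k.+2 = (INR k.+1 * (1 + / INR k.+1))%R.
    rewrite (S_INR k.+1); field; lra.
  rewrite Rpow_mult_distr Rmult_comm; apply: Rmult_le_compat_r.
    apply: pow_le; lra.
  have := onepx_pow (k.+1) (Rlt_le _ _ (Rinv_0_lt_compat _ k0)).
  by rewrite Rinv_r ?Rmult_1_r; lra.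
change (INR k.+2 * INR k.+2 ^ k.+1 <= exp 1 * exp 1 ^ k.+1 * (INR k.+2 * INR (k.+1)`!))%R.
have k2 : (0 < INR k.+2)%R by apply: lt_0_INR; apply/ltP.
have := Rmult_le_compat_l (exp 1) _ _ (Rlt_le _ _ e0) IH.
have : (0 <= exp 1 ^ k.+1)%R by apply: pow_le; lra.
nra.
Qed.

Theorem lemma2p3 (V : finType) (a : rel V) (s : nat) :
  1 <= s -> irreflexive a -> Ts_free a s ->
  forall k : nat, 1 <= k ->
  exists g : rel V,
    [/\ symmetric g, irreflexive g, Ks_free g s &
     (INR (indep_count g k) <= (exp 1 / INR k) ^ k * INR (fwi a k))%R].
Proof.
move=> s1 airr Tfree k k1.
have [sg Hsg] := main_nat a k.
exists (Gs a sg); split.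
- by move=> u v; rewrite /Gs orbC.
- by move=> u; rewrite /Gs ltnn !andbF.
- move=> [f [finj fG]]; apply: Tfree.
  have cS : #|f @: [set: 'I_s]| = s by rewrite card_imset // cardsT card_ord.
  have [t [tS tinc]] := sorted_enum (rk_inj (sg:=sg)) cS.
  exists t; split.
    move=> i j e; apply/val_inj; case: (ltngtP i j) => // h; have := tinc _ _ h;
    by rewrite e ltnn.
  move=> i j h.
  have [i' _ ei] := imsetP (tS i); have [j' _ ej] := imsetP (tS j).
  have ne : i' != j'.
    by apply/eqP => e; have := tinc _ _ h; rewrite ei ej e ltnn.
  have := fG _ _ ne; rewrite -ei -ej /Gs (tinc _ _ h).
  by case: (a (t i) (t j)) => //=; rewrite ltnNge ltnW ?tinc // andbF.
- set i := indep_count _ _ in Hsg *; set F := fwi a k in Hsg *.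
  have H1 : (INR (k`!) * INR i <= INR F)%R by rewrite -mult_INR multE; apply/le_INR/leP.
  have hb := fact_bound k.
  have k0 : (0 < INR k)%R by apply: lt_0_INR; apply/ltP.
  have K0 : (0 < INR k ^ k)%R by apply: pow_lt.
  rewrite /Rdiv Rpow_mult_distr pow_inv.
  have i0 : (0 <= INR i)%R by apply: pos_INR.
  have e0 : (0 <= exp 1 ^ k)%R by apply: pow_le; apply: Rlt_le; apply: exp_pos.
  apply: (Rmult_le_reg_r (INR k ^ k)) => //.
  have -> : (exp 1 ^ k * / INR k ^ k * INR F * INR k ^ k = exp 1 ^ k * INR F)%R.
    by field; lra.
  nra.
Qed.
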